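(* Let $\psi_{i,j}\ge 0$ for bidders $i\in[n]$ ($n\ge 2$) and types $j\in[m]$. Define $\mathcal{B}=\min_{i'}\sum_j\max_{i\ne i'}\psi_{i,j}$ and $\tilde{\mathcal{B}}=\sum_j\max_{i\ne i^*}\psi_{i,j}$, where $i^*=\arg\max_i\sum_{j\in d(i)}\psi_{i,j}$. Then $\tilde{\mathcal{B}}/2\le\mathcal{B}\le\tilde{\mathcal{B}}$.
   Context: Here $\psi_{i,j}=p_jv_{i,j}$ in a probabilistic single-item auction (type probabilities $p_j$, valuations $v_{i,j}$). For a type $j$, $w_1(j)$ is the bidder maximizing $\psi_{i,j}$ (ties broken by a fixed priority order on bidders), and $d(i)=\{j: w_1(j)=i\}$. Ties in the choice of $i^*$ are broken arbitrarily. *)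

(* Defs.v *)
From mathcomp Require Import all_boot all_order all_algebra.
Set Implicit Arguments. Unset Strict Implicit. Unset Printing Implicit Defensive.
Import Order.TTheory GRing.Theory Num.Theory.
Local Open Scope ring_scope.

Section Defs.
Variables (R : realFieldType) (n m : nat) (psi : 'I_n -> 'I_m -> R).

(* max_{i <> i'} psi i j ; seeded with 0, which is harmless since psi >= 0
   and (n >= 2) the range is nonempty. *)
Definition maxExcl (i' : 'I_n) (j : 'I_m) : R :=
  \big[Num.max/0]_(i < n | i != i') psi i j.

Definition Bexcl (i' : 'I_n) : R := \sum_(j < m) maxExcl i' j.

(* B = min_{i'} Bexcl i' ; the fold is seeded with Bexcl i0 for some bidder
   i0, which is itself one of the terms, so the value is the true minimum
   whatever i0 is. *)
Definition Bmin (i0 : 'I_n) : R := \big[Num.min/Bexcl i0]_(i' < n) Bexcl i'.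

Definition dset (w1 : 'I_m -> 'I_n) (i : 'I_n) : {set 'I_m} :=
  [set j | w1 j == i].

Definition dval (w1 : 'I_m -> 'I_n) (i : 'I_n) : R :=
  \sum_(j in dset w1 i) psi i j.
End Defs.

(* Main.v *)
Require Import Defs.
From mathcomp Require Import all_boot all_order all_algebra.
From mathcomp Require Import lra.
Import Order.TTheory GRing.Theory Num.Theory.
Local Open Scope ring_scope.

Section H.
Variables (R : realFieldType) (n m : nat) (psi : 'I_n -> 'I_m -> R).
Hypothesis psi_ge0 : forall i j, 0 <= psi i j.

Lemma maxExcl_ge i' j i : i != i' -> psi i j <= maxExcl psi i' j.
Proof.
move=> hi; rewrite /maxExcl (bigD1 i) //=.
by rewrite le_max lexx.
Qed.

Lemma maxExcl_ge0 i' j : 0 <= maxExcl psi i' j.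
Proof.
rewrite /maxExcl; apply: (big_rec (fun x => 0 <= x)) => // i x _ hx.
by rewrite le_max hx orbT.
Qed.

Lemma maxExcl_le i' j k : (forall i, psi i j <= psi k j) -> maxExcl psi i' j <= psi k j.
Proof.
move=> hk; rewrite /maxExcl; apply: (big_rec (fun x => x <= psi k j)) => // i x _ hx.
by rewrite ge_max hx hk.
Qed.
End H.

Theorem claim4 (R : realFieldType) (n m : nat) (hn : (2 <= n)%N)
  (psi : 'I_n -> 'I_m -> R) (psi_ge0 : forall i j, 0 <= psi i j)
  (prio : 'I_n -> nat) (prio_inj : injective prio)
  (w1 : 'I_m -> 'I_n) (w1_max : forall j i, psi i j <= psi (w1 j) j)
  (w1_tie : forall j i, psi i j = psi (w1 j) j -> (prio (w1 j) <= prio i)%N)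
  (istar : 'I_n) (istar_max : forall i, dval psi w1 i <= dval psi w1 istar) :
  Bexcl psi istar / 2 <= Bmin psi istar /\ Bmin psi istar <= Bexcl psi istar.
Proof.
set T := \sum_(j < m) psi (w1 j) j.
have hBT : forall i', Bexcl psi i' <= T.
  by move=> i'; apply: ler_sum => j _; apply: maxExcl_le.
have hB0 : forall i', 0 <= Bexcl psi i'.
  by move=> i'; apply: sumr_ge0 => j _; apply: maxExcl_ge0.
have hdv : forall i, dval psi w1 i = \sum_(j < m | w1 j == i) psi (w1 j) j.
  move=> i; rewrite /dval (eq_bigl (fun j => w1 j == i)); last by move=> j; rewrite /dset inE.
  by apply: eq_bigr => j /eqP ->.
have hsplit : forall i', T = dval psi w1 i' + \sum_(j < m | w1 j != i') psi (w1 j) j.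
  by move=> i'; rewrite hdv /T (bigID (fun j => w1 j == i')).
have h1 : forall i', T - dval psi w1 i' <= Bexcl psi i'.
  move=> i'; rewrite (hsplit i') addrAC subrr add0r /Bexcl [X in _ <= X](bigID (fun j => w1 j == i')) /=.
  rewrite -[X in X <= _]add0r; apply: lerD.
    by apply: sumr_ge0 => j _; apply: maxExcl_ge0.
  by apply: ler_sum => j hj; apply: maxExcl_ge.
have h2 : forall i', i' != istar -> dval psi w1 istar <= Bexcl psi i'.
  move=> i' hi; rewrite hdv /Bexcl [X in _ <= X](bigID (fun j => w1 j == istar)) /=.
  rewrite -[X in X <= _]addr0; apply: lerD.
    by apply: ler_sum => j /eqP hj; apply: maxExcl_ge; rewrite hj eq_sym.
  by apply: sumr_ge0 => j _; apply: maxExcl_ge0.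
have hall : forall i', Bexcl psi istar / 2 <= Bexcl psi i'.
  move=> i'; have [->|hi] := eqVneq i' istar.
    by have := hB0 istar; lra.
  have := h1 i'; have := h2 i' hi; have := istar_max i'; have := hBT istar.
  lra.
split.
  rewrite /Bmin; apply: (big_rec (fun x => Bexcl psi istar / 2 <= x)).
    exact: hall.
  by move=> i x _ hx; rewrite le_min hx hall.
rewrite /Bmin (bigD1 istar) //=.
by rewrite ge_min lexx.
Qed.
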